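(* The structure $\mathbb{C}_2=(\{0,1\};\neq,\{0\},\{1\})$ pp-constructs the structure $\mathbb{H}=(\{0,1,2\};\mu_2,\tau_0,\tau_1,\psi_2',\rho_2,\{0,2\},\{1,2\},\{0\},\{1\},\{2\})$.
   Context: Relations on $\{0,1,2\}$: $\mu_2$ is the equivalence relation with classes $\{0,1\},\{2\}$; $\rho_2=\{0,1,2\}^2\setminus\mu_2$; $\psi_2'=\{(0,1),(1,0)\}$; $\tau_0=\{(0,0),(1,0),(2,1)\}$; $\tau_1=\{(0,1),(1,1),(2,0)\}$. A relation is pp-definable in $\mathbb{A}$ if definable by a formula using the relations of $\mathbb{A}$, equality, conjunction and existential quantification. A pp-power of $\mathbb{A}$ is a structure isomorphic to one with domain $A^n$ whose $k$-ary relations, viewed as $kn$-ary relations on $A$, are pp-definable in $\mathbb{A}$. $\mathbb{A}$ pp-constructs $\mathbb{B}$ if $\mathbb{B}$ is homomorphically equivalent (homomorphisms in both directions) to a pp-power of $\mathbb{A}$. *)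

(* Defs.v *)
From mathcomp Require Import all_boot.

Set Implicit Arguments.
Unset Strict Implicit.
Unset Printing Implicit Defensive.

Definition arity (sig : seq nat) (i : 'I_(size sig)) : nat := nth 0 sig i.

(* A relational structure of signature sig: a domain and, for each relation
   symbol i, a relation given as a predicate on tuples (lists); only lists of
   length [arity sig i] are ever consulted. *)
Record struct (sig : seq nat) := Struct {
  dom : Type;
  rel : 'I_(size sig) -> seq dom -> Prop
}.
Arguments Struct {sig} dom rel.
Arguments dom {sig} s.
Arguments rel {sig} s i _.

Definition is_hom (sig : seq nat) (A B : struct sig) (f : dom A -> dom B) : Prop :=
  forall (i : 'I_(size sig)) (s : seq (dom A)),
    size s = arity i -> rel A i s -> rel B i (map f s).

Definition hom_equiv (sig : seq nat) (A B : struct sig) : Prop :=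
  (exists f : dom A -> dom B, is_hom f) /\ (exists g : dom B -> dom A, is_hom g).

Inductive ppf (sig : seq nat) : Type :=
| PPEq  of nat & nat
| PPRel (i : 'I_(size sig)) (xs : seq nat)
| PPAnd of ppf sig & ppf sig
| PPEx  of nat & ppf sig.

Fixpoint sat (sig : seq nat) (A : struct sig) (env : nat -> dom A) (f : ppf sig)
  : Prop :=
  match f with
  | PPEq x y => env x = env y
  | PPRel i xs => size xs = arity i /\ rel A i (map env xs)
  | PPAnd f g => sat env f /\ sat env g
  | PPEx x f => exists a : dom A, sat (fun y => if y == x then a else env y) f
  end.

Definition pp_definable (sig : seq nat) (A : struct sig) (m : nat)
  (Q : seq (dom A) -> Prop) : Prop :=
  exists (phi : ppf sig) (xs : seq nat),
    size xs = m /\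
    forall s : seq (dom A), size s = m ->
      (Q s <-> exists env : nat -> dom A, map env xs = s /\ sat env phi).

Arguments pp_definable {sig} A m Q.

Definition pp_power_rels (sig : seq nat) (A : struct sig) (sig' : seq nat)
  (n : nat) (R : 'I_(size sig') -> seq (n.-tuple (dom A)) -> Prop) : Prop :=
  forall i : 'I_(size sig'),
    exists Q : seq (dom A) -> Prop,
      pp_definable A (arity i * n) Q /\
      forall t : seq (n.-tuple (dom A)), size t = arity i ->
        (R i t <-> Q (flatten (map val t))).

Arguments pp_power_rels {sig} A {sig'} n R.

(* A pp-constructs B: B is homomorphically equivalent to a pp-power of A.
   (Isomorphic copies are absorbed since isomorphisms compose with
   homomorphisms.) *)
Definition pp_constructs (sig : seq nat) (A : struct sig) (sig' : seq nat)
  (B : struct sig') : Prop :=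
  exists (n : nat) (R : 'I_(size sig') -> seq (n.-tuple (dom A)) -> Prop),
    0 < n /\ pp_power_rels A n R /\
    hom_equiv B (Struct (n.-tuple (dom A)) R).

Arguments pp_constructs {sig} A {sig'} B.

Definition sigC2 : seq nat := [:: 2; 1; 1].
Definition C2 : struct sigC2 :=
  Struct 'I_2 (fun i s =>
    match val i, map val s with
    | 0, [:: a; b] => a <> b
    | 1, [:: a] => a = 0
    | 2, [:: a] => a = 1
    | _, _ => False
    end).

Definition sigH : seq nat := [:: 2; 2; 2; 2; 2; 1; 1; 1; 1; 1].
Definition H : struct sigH :=
  Struct 'I_3 (fun i s =>
    match val i, map val s with
    | 0, [:: a; b] => (a == 2) = (b == 2)
    | 1, [:: a; b] => (a, b) \in [:: (0, 0); (1, 0); (2, 1)]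
    | 2, [:: a; b] => (a, b) \in [:: (0, 1); (1, 1); (2, 0)]
    | 3, [:: a; b] => (a, b) \in [:: (0, 1); (1, 0)]
    | 4, [:: a; b] => (a == 2) <> (b == 2)
    | 5, [:: a] => a \in [:: 0; 2]
    | 6, [:: a] => a \in [:: 1; 2]
    | 7, [:: a] => a = 0
    | 8, [:: a] => a = 1
    | 9, [:: a] => a = 2
    | _, _ => False
    end).

(* Main.v *)
Require Import Defs.
From mathcomp Require Import all_boot.

Set Implicit Arguments.
Unset Strict Implicit.
Unset Printing Implicit Defensive.

Definition bo0 : 'I_2 := @Ordinal 2 0 isT.
Definition bo1 : 'I_2 := @Ordinal 2 1 isT.
Definition cneq : 'I_(size sigC2) := @Ordinal 3 0 isT.
Definition cz : 'I_(size sigC2) := @Ordinal 3 1 isT.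
Definition co : 'I_(size sigC2) := @Ordinal 3 2 isT.

Definition Qc (k : nat) (s : seq 'I_2) : Prop :=
  match k, map val s with
  | 0, [:: a1; _; b1; _] => a1 = b1
  | 1, [:: a1; _; b1; b2] => b1 = 0 /\ b2 = a1
  | 2, [:: a1; _; b1; b2] => b1 = 0 /\ b2 <> a1
  | 3, [:: a1; a2; b1; b2] => a1 = 0 /\ b1 = 0 /\ a2 <> b2
  | 4, [:: a1; _; b1; _] => a1 <> b1
  | 5, [:: _; a2] => a2 = 0
  | 6, [:: a1; a2] => a1 <> a2
  | 7, [:: a1; a2] => a1 = 0 /\ a2 = 0
  | 8, [:: a1; a2] => a1 = 0 /\ a2 = 1
  | 9, [:: a1; a2] => a1 = 1 /\ a2 = 0
  | _, _ => False
  end.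

Definition phi (k : nat) : ppf sigC2 :=
  match k with
  | 0 => PPEq _ 0 2
  | 1 => PPAnd (PPRel cz [:: 2]) (PPEq _ 3 0)
  | 2 => PPAnd (PPRel cz [:: 2]) (PPRel cneq [:: 3; 0])
  | 3 => PPAnd (PPRel cz [:: 0]) (PPAnd (PPRel cz [:: 2]) (PPRel cneq [:: 1; 3]))
  | 4 => PPRel cneq [:: 0; 2]
  | 5 => PPRel cz [:: 1]
  | 6 => PPRel cneq [:: 0; 1]
  | 7 => PPAnd (PPRel cz [:: 0]) (PPRel cz [:: 1])
  | 8 => PPAnd (PPRel cz [:: 0]) (PPRel co [:: 1])
  | _ => PPAnd (PPRel co [:: 0]) (PPRel cz [:: 1])
  end.

Definition xs (k : nat) : seq nat := if k < 5 then [:: 0; 1; 2; 3] else [:: 0; 1].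

Definition RB (i : 'I_(size sigH)) (t : seq (2.-tuple 'I_2)) : Prop :=
  Qc (val i) (flatten (map val t)).

Ltac fin := intuition (try discriminate; try done; try (apply: val_inj; done);
  try match goal with H : Ordinal _ = Ordinal _ |- _ => have /= := f_equal val H; discriminate end).
Ltac dI := let x := fresh in let h := fresh in case=> [[|[|x]] h] //.

Lemma ppdef (i : 'I_(size sigH)) : pp_definable C2 (arity i * 2) (Qc (val i)).
Proof.
exists (phi i), (xs i).
case: i => [[|[|[|[|[|[|[|[|[|[|k]]]]]]]]]] hi] //; split => //= s hs.
all: case: s hs => [|a1 [|a2 [|b1 [|b2 []]]]] //= _.
all: split.
all: first [ (move=> h; exists (nth a1 [:: a1;a2;b1;b2]); split=>//=; move: h;
              move: a1 a2 b1 b2; do 4 dI; fin; fail)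
           | (move=> h; exists (nth a1 [:: a1;a2]); split=>//=; move: h;
              move: a1 a2; do 2 dI; fin; fail)
           | (case=> env [] [E1 E2 E3 E4]; rewrite ?E1 ?E2 ?E3 ?E4;
              move: a1 a2 b1 b2 {E1 E2 E3 E4}; do 4 dI; fin; fail)
           | (case=> env [] [E1 E2]; rewrite ?E1 ?E2;
              move: a1 a2 {E1 E2}; do 2 dI; fin; fail) ].
Qed.


Definition fH (a : 'I_3) : 2.-tuple 'I_2 :=
  [tuple (if val a == 2 then bo1 else bo0); (if val a == 1 then bo1 else bo0)].
Definition tr0 : 'I_3 := @Ordinal 3 0 isT.
Definition tr1 : 'I_3 := @Ordinal 3 1 isT.
Definition tr2 : 'I_3 := @Ordinal 3 2 isT.
Definition gH (t : 2.-tuple 'I_2) : 'I_3 :=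
  match map val (val t) with
  | [:: 1; _] => tr2
  | [:: 0; 1] => tr1
  | _ => tr0
  end.

Ltac dT := let x := fresh in let y := fresh in let h := fresh in
  case=> [[|x [|y []]] h] //; move: x y h; do 2 dI; move=> h.
Ltac dH := let x := fresh in let h := fresh in case=> [[|[|[|x]]] h] //.

Theorem lemma6p3 : pp_constructs C2 H.
Proof.
exists 2, RB; split => //; split.
  by move=> i; exists (Qc (val i)); split; [exact: ppdef | by []].
split.
- exists fH => i s.
  case: i => [[|[|[|[|[|[|[|[|[|[|k]]]]]]]]]] hi] //;
  (case: s => [|a [|b []]] //= _); rewrite /RB /=; 
  first [ (move: a b; do 2 dH; fin; fail) | (move: a; dH; fin; fail) ].

- exists gH => i s.
  case: i => [[|[|[|[|[|[|[|[|[|[|k]]]]]]]]]] hi] //;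
  (case: s => [|a [|b []]] //= _); rewrite /RB /=;
  first [ (move: a b; do 2 dT; simpl in *; fin; fail) | (move: a; dT; simpl in *; fin; fail) ].
Qed.
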